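(* Let $J$ be a Jacobi matrix and let $C_n,G_n$ be as defined in the context. (i) If $\sum_{n=1}^\infty[|b_n|+|a_n^2-1|]<\infty$, then for each $z\in\overline{\mathbb{D}}\setminus\{\pm1\}$, $A_0(z):=\sup_n[|G_n(z)|+|C_n(z)|]<\infty$, and $A_0(z)$ is bounded uniformly on compact subsets of $\overline{\mathbb{D}}\setminus\{\pm1\}$. (ii) If $\sum_{n=1}^\infty n[|b_n|+|a_n^2-1|]<\infty$, then there is a constant $A_1$ with $\sup_{n,\,z\in\overline{\mathbb{D}}}|G_n(z)|\le A_1$ and $\sup_{n,\,z\in\overline{\mathbb{D}}}\frac{|C_n(z)|}{1+n}\le A_1$. (iii) If $|b_n|+|a_n^2-1|\le CR^{-2n}$ for all $n$, for some $C$ and some $R>1$, then there is a constant $A_2$ such that for all $z$ with $|z|<R$ and all $n$, $|G_n(z)|+|C_n(z)|\le A_2(1+n)[\max(1,|z|)]^{2n}$.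
   Context: $J$ is a Jacobi matrix with diagonal entries $b_n\in\mathbb{R}$ and off-diagonal entries $a_n>0$ ($n\ge1$); set $a_0=1$. The orthonormal polynomials satisfy $p_{-1}=0$, $p_0=1$, $xp_n(x)=a_{n+1}p_{n+1}(x)+b_{n+1}p_n(x)+a_np_{n-1}(x)$. Define $c_n(z)=z^np_n(z+z^{-1})$, $g_n(z)=z^n\bigl(p_n(z+z^{-1})-a_nzp_{n-1}(z+z^{-1})\bigr)$, $C_n=a_1\cdots a_n\,c_n$, $G_n=a_1\cdots a_n\,g_n$ (polynomials in $z$). $\mathbb{D}=\{|z|<1\}$. *)

(* Defs.v *)
From HB Require Import structures.
From mathcomp Require Import all_boot all_order all_algebra.
From mathcomp Require Import all_classical all_reals all_analysis.
From mathcomp Require Import complex.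
Set Implicit Arguments. Unset Strict Implicit. Unset Printing Implicit Defensive.
Import Order.TTheory GRing.Theory Num.Theory numFieldNormedType.Exports.
Local Open Scope ring_scope.

(* Jacobi parameters: a n (n >= 1) off-diagonal, b n (n >= 1) diagonal;
   the values a 0, b 0 are irrelevant; the convention a_0 = 1 is [aa]. *)
Section Jacobi.
Variable R : realType.
Variables a b : nat -> R.

Definition aa (n : nat) : R := if n is 0 then 1 else a n.

(* ppair n = (p_{n-1}, p_n), with p_{-1} = 0, p_0 = 1 and
   x p_n = a_{n+1} p_{n+1} + b_{n+1} p_n + a_n p_{n-1}. *)
Fixpoint ppair (n : nat) : {poly R} * {poly R} :=
  match n with
  | 0 => (0, 1)
  | n'.+1 => let: (q, p) := ppair n' in
      (p, (a n'.+1)^-1 *: (('X - (b n'.+1)%:P) * p - aa n' *: q))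
  end.

Definition opoly (n : nat) : {poly R} := (ppair n).2.
Definition opoly_prev (n : nat) : {poly R} := (ppair n).1.

(* homog n q is the polynomial z |-> z^n q(z + z^{-1}), for deg q <= n:
   z^n (z + z^{-1})^k = z^{n-k} (1 + z^2)^k. *)
Definition homog (n : nat) (q : {poly R}) : {poly R} :=
  \sum_(k < size q) q`_k *: ('X^(n - k) * (1 + 'X^2) ^+ k).

Definition cpoly (n : nat) : {poly R} := homog n (opoly n).
Definition gpoly (n : nat) : {poly R} :=
  homog n (opoly n) - aa n *: ('X * homog n (opoly_prev n)).

Definition aprod (n : nat) : R := \prod_(1 <= i < n.+1) a i.

Definition Cpoly (n : nat) : {poly R} := aprod n *: cpoly n.
Definition Gpoly (n : nat) : {poly R} := aprod n *: gpoly n.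

Definition Cn (n : nat) (z : R[i]) : R[i] :=
  (map_poly (real_complex R) (Cpoly n)).[z].
Definition Gn (n : nat) (z : R[i]) : R[i] :=
  (map_poly (real_complex R) (Gpoly n)).[z].
End Jacobi.

(* identification R x R = C (the topology on C is the product topology) *)
Definition cplx (R : realType) (p : R * R) : R[i] := (p.1 +i* p.2)%C.

(* Main.v *)
Require Import Defs.
From HB Require Import structures.
From mathcomp Require Import all_boot all_order all_algebra.
From mathcomp Require Import all_classical all_reals all_analysis.
From mathcomp Require Import complex.
From mathcomp Require Import ring lra.
Set Implicit Arguments. Unset Strict Implicit. Unset Printing Implicit Defensive.
Import Order.TTheory GRing.Theory Num.Theory numFieldNormedType.Exports.
Local Open Scope ring_scope.
Section Poly.
Variable R : realType.
Variables a b : nat -> R.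

Lemma ppairS n : ppair a b n.+1 =
  ((ppair a b n).2, (a n.+1)^-1 *: (('X - (b n.+1)%:P) * (ppair a b n).2 - aa a n *: (ppair a b n).1)).
Proof. by rewrite /=; case: (ppair a b n). Qed.

Lemma size_ppair n : (size (ppair a b n).1 <= n)%N /\ (size (ppair a b n).2 <= n.+1)%N.
Proof.
elim: n => [|n [IH1 IH2]]; first by rewrite /= size_poly0 size_poly1.
rewrite ppairS /=; split => //.
apply: leq_trans (size_scale_leq _ _) _.
apply: leq_trans (size_polyD _ _) _.
rewrite geq_max; apply/andP; split.
  apply: leq_trans (size_mul_leq _ _) _.
  by rewrite size_XsubC /=.
rewrite size_polyN; apply: leq_trans (size_scale_leq _ _) _.
by apply: leq_trans IH1 _; apply: leqW; apply: leqW.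
Qed.

Lemma size_opoly n : (size (opoly a b n) <= n.+1)%N.
Proof. by case: (size_ppair n). Qed.
Lemma size_opoly_prev n : (size (opoly_prev a b n) <= n)%N.
Proof. by case: (size_ppair n). Qed.
Lemma opoly_prevS n : opoly_prev a b n.+1 = opoly a b n.
Proof. by rewrite /opoly_prev ppairS. Qed.
Lemma opolyS n : opoly a b n.+1 =
  (a n.+1)^-1 *: (('X - (b n.+1)%:P) * opoly a b n - aa a n *: opoly_prev a b n).
Proof. by rewrite /opoly ppairS. Qed.

Definition hs (N n : nat) (q : {poly R}) : {poly R} :=
  \sum_(k < N) q`_k *: ('X^(n - k) * (1 + 'X^2) ^+ k).

Lemma hs_widen N n (q : {poly R}) : (size q <= N)%N -> hs N n q = homog n q.
Proof.
move=> hq; rewrite /hs /homog.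
rewrite (big_ord_widen N (fun k => q`_k *: ('X^(n - k) * (1 + 'X^2) ^+ k)) hq).
rewrite [RHS]big_mkcond /=.

apply: eq_bigr => k _.
case: ifP => // /negbT; rewrite -leqNgt => hk.
by rewrite nth_default // scale0r.
Qed.

Lemma hsD N n (p q : {poly R}) : hs N n (p + q) = hs N n p + hs N n q.
Proof. by rewrite /hs -big_split /=; apply: eq_bigr => k _; rewrite coefD scalerDl. Qed.
Lemma hsZ N n c (q : {poly R}) : hs N n (c *: q) = c *: hs N n q.
Proof. by rewrite /hs scaler_sumr; apply: eq_bigr => k _; rewrite coefZ scalerA. Qed.
Lemma hsN N n (q : {poly R}) : hs N n (- q) = - hs N n q.
Proof. by rewrite -scaleN1r hsZ scaleN1r. Qed.
Lemma hsB N n (p q : {poly R}) : hs N n (p - q) = hs N n p - hs N n q.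
Proof. by rewrite hsD hsN. Qed.

Lemma hsX N n (q : {poly R}) : hs N.+1 n.+1 ('X * q) = (1 + 'X^2) * hs N n q.
Proof.
rewrite /hs big_ord_recl /= coefXM /= scale0r add0r mulr_sumr.
apply: eq_bigr => k _; rewrite coefXM /= add0n /bump /= add1n subSS exprS.
by rewrite -scalerAr mulrCA.
Qed.

Lemma hs_shift N n j (q : {poly R}) : (size q <= n.+1)%N -> hs N (n + j) q = 'X^j * hs N n q.
Proof.
move=> hq; rewrite /hs mulr_sumr; apply: eq_bigr => k _.
case: (leqP k n) => hk.
  by rewrite -scalerAr mulrA -exprD addnC addnBA.
rewrite nth_default ?scale0r ?mulr0 //; exact: leq_trans hq hk.
Qed.

Lemma hs_shift1 N n (q : {poly R}) : (size q <= n.+1)%N -> hs N n.+1 q = 'X * hs N n q.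
Proof. by move=> hq; rewrite -addn1 hs_shift // expr1. Qed.

Definition Tp n := homog n (opoly_prev a b n).

Lemma aprodS n : aprod a n.+1 = aprod a n * a n.+1.
Proof. by rewrite /aprod big_nat_recr. Qed.

Lemma homog_opolyS n : a n.+1 != 0 -> homog n.+1 (opoly a b n.+1) =
  (a n.+1)^-1 *: ((1 + 'X^2) * cpoly a b n - b n.+1 *: ('X * cpoly a b n)
     - aa a n *: ('X * Tp n)).
Proof.
move=> ha.
rewrite -(@hs_widen n.+2 n.+1 _ (size_opoly n.+1)) opolyS hsZ; congr (_ *: _).
rewrite mulrBl mul_polyC !hsB !hsZ hsX hs_widen ?size_opoly //.
have h1 : hs n.+2 n.+1 (opoly a b n) = 'X * cpoly a b n.
  rewrite hs_shift1 ?size_opoly // hs_widen //.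
  exact: leq_trans (size_opoly n) _.
have h2 : hs n.+2 n.+1 (opoly_prev a b n) = 'X * Tp n.
  rewrite hs_shift1 ?hs_widen //.
    exact: (leq_trans (size_opoly_prev n) (leq_trans (leqnSn n) (leqnSn n.+1))).
  exact: (leq_trans (size_opoly_prev n) (leqnSn n)).
by rewrite h1 h2.
Qed.

Lemma Cpoly0 : Cpoly a b 0 = 1.
Proof.
rewrite /Cpoly /aprod big_geq // scale1r /cpoly /homog /opoly /= size_poly1.
by rewrite big_ord1 /= coefC /= scale1r expr0 mulr1.
Qed.

Lemma Gpoly0 : Gpoly a b 0 = 1.
Proof.
rewrite /Gpoly /aprod big_geq // scale1r /gpoly /homog /opoly /opoly_prev /=.
rewrite size_poly1 size_poly0 big_ord0 mulr0 scaler0 subr0.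
by rewrite big_ord1 /= coefC /= scale1r expr0 mulr1.
Qed.

Lemma CpolyS n : a n.+1 != 0 ->
  Cpoly a b n.+1 = Gpoly a b n + ('X^2 - b n.+1 *: 'X) * Cpoly a b n.
Proof.
move=> ha; rewrite /Cpoly /Gpoly /gpoly -/(Tp n) -/(cpoly a b n).
rewrite {1}/cpoly homog_opolyS // aprodS scalerA mulfK //.
rewrite -!mul_polyC; ring.
Qed.

Lemma GpolyS n : Gpoly a b n.+1 = Cpoly a b n.+1 - (a n.+1 ^+ 2) *: ('X^2 * Cpoly a b n).
Proof.
rewrite /Cpoly /Gpoly /gpoly -/(cpoly a b n.+1) opoly_prevS.
have -> : homog n.+1 (opoly a b n) = 'X * cpoly a b n.
  by change (hs (size (opoly a b n)) n.+1 (opoly a b n) = 'X * cpoly a b n);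
    rewrite hs_shift1 ?size_opoly.
rewrite /= aprodS -!mul_polyC !polyCM; ring.
Qed.
End Poly.
Local Open Scope complex_scope.
Section Ev.
Variable R : realType.
Variables a b : nat -> R.
Definition ev (z : R[i]) (p : {poly R}) := (map_poly (real_complex R) p).[z].
Lemma evD z p q : ev z (p + q) = ev z p + ev z q.
Proof. by rewrite /ev rmorphD hornerD. Qed.
Lemma evB z p q : ev z (p - q) = ev z p - ev z q.
Proof. by rewrite /ev rmorphB hornerD hornerN. Qed.
Lemma evM z p q : ev z (p * q) = ev z p * ev z q.
Proof. by rewrite /ev rmorphM hornerM. Qed.
Lemma evZ z c p : ev z (c *: p) = c%:C * ev z p.
Proof. by rewrite /ev map_polyZ hornerZ. Qed.
Lemma evX z : ev z 'X = z.
Proof. by rewrite /ev map_polyX hornerX. Qed.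
Lemma ev1 z : ev z 1 = 1.
Proof. by rewrite /ev rmorph1 hornerC. Qed.
End Ev.
Section Rec.
Variable R : realType.
Variables a b : nat -> R.
Lemma Cn0 z : Cn a b 0 z = 1.
Proof. by rewrite /Cn -/(ev z _) Cpoly0 ev1. Qed.
Lemma Gn0 z : Gn a b 0 z = 1.
Proof. by rewrite /Gn -/(ev z _) Gpoly0 ev1. Qed.
Lemma CnS n z : a n.+1 != 0 ->
  Cn a b n.+1 z = Gn a b n z + (z ^+ 2 - (b n.+1)%:C * z) * Cn a b n z.
Proof.
move=> ha; rewrite /Cn /Gn -!/(ev z _) CpolyS // evD evM evB evZ !evM evX expr2.
by rewrite evZ evX.
Qed.
Lemma GnS n z :
  Gn a b n.+1 z = Cn a b n.+1 z - (a n.+1 ^+ 2)%:C * (z ^+ 2 * Cn a b n z).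
Proof.
rewrite /Cn /Gn -!/(ev z _) GpolyS evB evZ evZ evM; congr (_ - _ * (_ * _)).
by rewrite expr2 evM evX expr2.
Qed.
End Rec.
Local Open Scope complex_scope.
Section NC.
Variable R : realType.
Definition nc (x : R[i]) : R := complex.Re `|x|.
Lemma normE (x : R[i]) : `|x| = (nc x)%:C.
Proof. by rewrite /nc normc_def. Qed.
Lemma nc_ge0 x : 0 <= nc x.
Proof. by rewrite -ler0c -normE. Qed.
Lemma ncD x y : nc (x + y) <= nc x + nc y.
Proof. by rewrite -lecR rmorphD /= -!normE ler_normD. Qed.
Lemma ncB x y : nc (x - y) <= nc x + nc y.
Proof. by rewrite -lecR rmorphD /= -!normE ler_normB. Qed.
Lemma ncM x y : nc (x * y) = nc x * nc y.
Proof. by apply: complexI; rewrite rmorphM /= -!normE normrM. Qed.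
Lemma ncX x n : nc (x ^+ n) = nc x ^+ n.
Proof. by apply: complexI; rewrite rmorphXn /= -!normE normrX. Qed.
Lemma ncR (r : R) : nc r%:C = `|r|.
Proof.
by rewrite /nc normc_def /= expr0n /= addr0 sqrtr_sqr.
Qed.
Lemma nc1 : nc 1 = 1.
Proof. by rewrite ncR normr1. Qed.

End NC.

Section Core.
Variable R : realType.
Variable z : R[i].
Variables G C : nat -> R[i].
Variables al be : nat -> R.
Hypothesis hG0 : G 0 = 1.
Hypothesis hC0 : C 0 = 1.
Hypothesis hC : forall n, C n.+1 = G n + (z ^+ 2 - (be n)%:C * z) * C n.
Hypothesis hG : forall n, G n.+1 = C n.+1 - (al n)%:C * (z ^+ 2 * C n).
Let d n : R := `|be n| + `|al n - 1|.
Let eps n : R[i] := (1 - al n)%:C * z ^+ 2 - (be n)%:C * z.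

Lemma hG' n : G n.+1 = G n + eps n * C n.
Proof. by rewrite hG hC /eps rmorphB /=; ring. Qed.

Lemma d_ge0 n : 0 <= d n.
Proof. by rewrite /d addr_ge0. Qed.

Lemma eps_bound n : nc (eps n) <= `|1 - al n| * nc z ^+ 2 + `|be n| * nc z.
Proof.
apply: le_trans (ncB _ _) _.
by rewrite !ncM !ncR expr2.
Qed.

Lemma core1 (w : R[i]) (L S : R) :
  nc z <= 1 -> w * (1 - z ^+ 2) = 1 -> nc w <= L - 1 -> 1 <= L ->
  (forall N, \sum_(k < N) d k <= S) ->
  forall n, nc (G n) + nc (C n) <= 4 * L ^+ 2 * expR (2 * L ^+ 2 * S).
Proof.
move=> hz hw hwL hL hS.
pose H n := C n - w * G n.
pose X n := nc (G n) + nc (H n).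
have hCH n : C n = H n + w * G n by rewrite /H subrK.
have X0 n : 0 <= X n by rewrite /X addr_ge0 ?nc_ge0.
have ncC n : nc (C n) <= L * X n.
  rewrite {1}hCH; apply: le_trans (ncD _ _) _; rewrite ncM /X.
  have := nc_ge0 (G n); have := nc_ge0 (H n); have := nc_ge0 w.
  move=> h1 h2 h3; nra.
have he n : nc (eps n) <= d n.
  apply: le_trans (eps_bound n) _.
  rewrite /d distrC addrC lerD // ler_piMr ?exprn_ile1 ?nc_ge0 //.
have hH n : H n.+1 = z ^+ 2 * H n - ((be n)%:C * z + w * eps n) * C n.
  apply/eqP; rewrite -subr_eq0; apply/eqP.
  have -> : H n.+1 - (z ^+ 2 * H n - ((be n)%:C * z + w * eps n) * C n)
     = G n * (1 - w * (1 - z ^+ 2)).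
    rewrite /H hG' hC /eps; ring.
  by rewrite hw subrr mulr0.
have step n : X n.+1 <= X n * (1 + 2 * L ^+ 2 * d n).
  have g1 : nc (G n.+1) <= nc (G n) + d n * nc (C n).
    rewrite hG'; apply: le_trans (ncD _ _) _; rewrite ncM lerD2l.
    by rewrite ler_wpM2r ?nc_ge0.
  have g2 : nc (H n.+1) <= nc (H n) + L * d n * nc (C n).
    rewrite hH; apply: le_trans (ncB _ _) _; rewrite !ncM.
    have := ncD ((be n)%:C * z) (w * eps n); rewrite !ncM ncR.
    have := he n; have := nc_ge0 z; have := nc_ge0 w; have := nc_ge0 (eps n).
    have := nc_ge0 (H n); have := nc_ge0 (C n); have := d_ge0 n.
    have := nc_ge0 ((be n)%:C * z + w * eps n).
    rewrite /d => h0 h1 h2 h3 h4 h5 h6 h7 h8.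
    have t1 : nc z * nc z * nc (H n) <= nc (H n).
      by rewrite ler_piMl // mulr_ile1.
    have t3 : `|be n| * nc z <= `|be n| by rewrite ler_piMr.
    have t4 : nc w * nc (eps n) <= (L - 1) * (`|be n| + `|al n - 1|).
      by rewrite ler_pM.
    have t5 : nc ((be n)%:C * z + w * eps n) <= L * (`|be n| + `|al n - 1|).
      have := normr_ge0 (al n - 1); lra.
    apply: lerD => //; rewrite ler_wpM2r //.
  have t : (1 + L) * d n * nc (C n) <= (1 + L) * d n * (L * X n).
    by rewrite ler_wpM2l ?ncC // mulr_ge0 ?d_ge0 //; lra.
  have t' : (1 + L) * d n * (L * X n) <= 2 * L ^+ 2 * d n * X n.
    rewrite -subr_ge0.
    have -> : 2 * L ^+ 2 * d n * X n - (1 + L) * d n * (L * X n)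
      = (L - 1) * L * (d n * X n) by ring.
    by rewrite !mulr_ge0 ?d_ge0 ?X0 //; lra.
  rewrite /X in t t' *; lra.
have gr n : X n <= X 0 * expR (2 * L ^+ 2 * \sum_(k < n) d k).
  elim: n => [|n IH]; first by rewrite big_ord0 mulr0 expR0 mulr1.
  apply: le_trans (step n) _.
  rewrite big_ord_recr /= [in X in _ <= X]mulrDr expRD mulrA.
  apply: ler_pM => //.
    by rewrite addr_ge0 // !mulr_ge0 ?d_ge0 // ?sqr_ge0; lra.
  exact: expR_ge1Dx.
have X00 : X 0 <= 2 * L.
  rewrite /X /H hG0 hC0 mulr1 nc1.
  have := ncB 1 w; rewrite nc1; lra.
have c0 : 0 <= 2 * L ^+ 2 by rewrite mulr_ge0 ?sqr_ge0.
move=> n.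
have hX : X n <= 2 * L * expR (2 * L ^+ 2 * S).
  apply: le_trans (gr n) _; apply: ler_pM; [exact: X0|exact: ltW (expR_gt0 _)|exact: X00|].
  by rewrite ler_expR ler_wpM2l.
have := ncC n; have := nc_ge0 (H n); rewrite /X in hX X00 *.
have := ler_wpM2l (_ : 0 <= L) hX.
have e : 4 * L ^+ 2 * expR (2 * L ^+ 2 * S) = 2 * L * (2 * L * expR (2 * L ^+ 2 * S)) by ring.
rewrite e; move=> h1 h2 h3.
have h4 : nc (G n) + nc (H n) <= L * (nc (G n) + nc (H n)).
  by rewrite ler_peMl // addr_ge0 ?nc_ge0.
have h5 := h1 (le_trans ler01 hL).
have := nc_ge0 (G n); lra.
Qed.

Lemma core2 (S : R) : (forall N, \sum_(k < N) (k.+1)%:R * d k <= S) ->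
  forall n, nc (G n) <= (Num.max 1 (nc z)) ^+ (2 * n) * expR (2 * S) /\
            nc (C n) <= (n.+1)%:R * (Num.max 1 (nc z)) ^+ (2 * n) * expR (2 * S).
Proof.
move=> hS.
set M := Num.max 1 (nc z).
have hM1 : 1 <= M by rewrite le_max lexx.
have hzM : nc z <= M by rewrite le_max lexx orbT.
set M2 := M ^+ 2.
have hM2 : 1 <= M2 by rewrite exprn_ege1.
have hzM2 : nc z <= M2.
  apply: le_trans hzM _; rewrite /M2 expr2 ler_peMl //; lra.
have hz2M2 : nc z * nc z <= M2.
  by rewrite /M2 expr2 ler_pM ?nc_ge0.
pose P n := expR (2 * \sum_(k < n) (k.+1)%:R * d k).
have P0 n : 0 <= P n by exact: ltW (expR_gt0 _).
have claim n : nc (G n) <= M2 ^+ n * P n /\ nc (C n) <= (n.+1)%:R * (M2 ^+ n * P n).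
  elim: n => [|n [IHg IHc]].
    by rewrite hG0 hC0 /P big_ord0 mulr0 expR0 expr0 !mulr1 nc1.
  set Q := M2 ^+ n * P n.
  set m1 : R := (n.+1)%:R.
  move: IHg IHc; rewrite -/Q -/m1 => IHg IHc.
  have m10 : 0 <= m1 by rewrite /m1 ler0n.
  have Q0 : 0 <= Q by rewrite /Q mulr_ge0 // exprn_ge0 //; lra.
  set A := M2 * Q.
  have QA : Q <= A by rewrite /A ler_peMl.
  set T := d n * M2 * (m1 * Q).
  have M20 : 0 <= M2 by lra.
  have T0 : 0 <= T by rewrite /T; apply: mulr_ge0; [apply: mulr_ge0 =>//; exact: d_ge0|exact: mulr_ge0].
  have m1T : 0 <= m1 * T by rewrite mulr_ge0.
  have hE : 1 + 2 * m1 * d n <= expR (2 * m1 * d n) by exact: expR_ge1Dx.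
  have hPS : M2 ^+ n.+1 * P n.+1 = A * expR (2 * m1 * d n).
    rewrite /A /Q /P big_ord_recr /= mulrDr expRD exprS /m1; rewrite [2 * (_ * d n)]mulrA; ring.
  have hAE : A + 2 * T <= M2 ^+ n.+1 * P n.+1.
    have eqAT : A * (1 + 2 * m1 * d n) = A + 2 * T by rewrite /A /T; ring.
    rewrite hPS -eqAT; apply: ler_wpM2l hE; exact: mulr_ge0.
  have he : nc (eps n) <= d n * M2.
    apply: le_trans (eps_bound n) _; rewrite /d mulrDl addrC distrC.
    rewrite expr2; apply: lerD; apply: ler_wpM2l => //.
  have e1 : nc (eps n) * nc (C n) <= T.
    by rewrite /T ler_pM ?nc_ge0 // mulr_ge0 ?d_ge0 //; lra.
  have hw : nc (z ^+ 2 - (be n)%:C * z) <= M2 + d n * M2.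
    apply: le_trans (ncB _ _) _; rewrite ncM ncR expr2 ncM lerD //.
    apply: le_trans (ler_wpM2l (normr_ge0 _) hzM2) _.
    by rewrite ler_wpM2r // /d lerDl.
  have e2 : nc (z ^+ 2 - (be n)%:C * z) * nc (C n) <= m1 * A + T.
    have -> : m1 * A + T = (M2 + d n * M2) * (m1 * Q) by rewrite /A /T; ring.
    rewrite ler_pM ?nc_ge0 //.
  split.
    rewrite hG'; apply: le_trans (ncD _ _) _; rewrite ncM.
    lra.
  rewrite hC; apply: le_trans (ncD _ _) _; rewrite ncM.
  have : (n.+2)%:R = m1 + 1 by rewrite /m1 -addn1 natrD.
  move=> ->.
  have : (m1 + 1) * (A + 2 * T) <= (m1 + 1) * (M2 ^+ n.+1 * P n.+1).
    by rewrite ler_wpM2l //; lra.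
  lra.
move=> n; have [h1 h2] := claim n.
have hPS : P n <= expR (2 * S) by rewrite ler_expR ler_wpM2l.
have hMn : 0 <= M2 ^+ n by rewrite exprn_ge0 //; lra.
rewrite exprM -/M2; split.
  by apply: le_trans h1 _; rewrite ler_wpM2l.
apply: le_trans h2 _; rewrite -mulrA ler_wpM2l // ler_wpM2l // ler0n.
Qed.
End Core.
Local Open Scope complex_scope.
Section T.
Variable R : realType.
Lemma sq (x y : R) : (x +i* y) ^+ 2 = (x ^+ 2 - y ^+ 2) +i* (2 * x * y).
Proof. by rewrite expr2; simpc; congr (_ +i* _); ring. Qed.
Local Open Scope classical_set_scope.
Lemma f1 (p : R * R) : (fun q : R * R => q.1) @ p --> p.1.
Proof. exact: cvg_fst. Qed.
Lemma f2 (p : R * R) : (fun q : R * R => q.2) @ p --> p.2.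
Proof. exact: cvg_snd. Qed.
End T.
Section T2.
Local Open Scope classical_set_scope.
Variable R : realType.
Lemma compact_bound (K : set (R * R)) (g : R * R -> R) : compact K ->
  (forall p, K p -> {for p, continuous g}) -> exists B, forall p, K p -> g p <= B.
Proof.
move=> cK hg.
have hw : {within K, continuous g}.
  apply: continuous_in_subspaceT => x; rewrite inE => Kx; exact: hg.
have := compact_bounded (continuous_compact hw cK).
move=> [M0 [_ HM]].
exists (M0 + 1) => p Kp.
have H1 : M0 < M0 + 1 by rewrite ltrDl ltr01.
have := HM _ H1.
move=> /(_ (g p) (ex_intro2 _ _ p Kp erefl)) /=.
exact: le_trans (ler_norm _).
Qed.
End T2.
Section T3.
Local Open Scope classical_set_scope.
Variable R : realType.
Definition gg (q : R * R) : R :=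
  (1 - q.1 * q.1 + q.2 * q.2) * (1 - q.1 * q.1 + q.2 * q.2) + (2 * q.1 * q.2) * (2 * q.1 * q.2).
Lemma gg_cont (p : R * R) : gg @ p --> gg p.
Proof.
have c1 : (fun q : R * R => q.1) @ p --> p.1 by exact: cvg_fst.
have c2 : (fun q : R * R => q.2) @ p --> p.2 by exact: cvg_snd.
have c0 : (fun q : R * R => (1 : R)) @ p --> (1 : R) by exact: cvg_cst.
have c2' : (fun q : R * R => (2 : R)) @ p --> (2 : R) by exact: cvg_cst.
have h1 : (fun q : R * R => 1 - q.1 * q.1 + q.2 * q.2) @ p --> (1 - p.1 * p.1 + p.2 * p.2).
  apply: cvgD; [apply: cvgB => //; exact: cvgM | exact: cvgM].
have h2 : (fun q : R * R => 2 * q.1 * q.2) @ p --> (2 * p.1 * p.2).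
  by apply: cvgM => //; apply: cvgM.
by apply: cvgD; apply: cvgM.
Qed.
Lemma ggV_cont (p : R * R) : gg p != 0 -> {for p, continuous (fun q => (gg q)^-1)}.
Proof. move=> h; apply: (@cvgV _ _ (nbhs p)) => //; exact: gg_cont. Qed.
End T3.
Section T4.
Variable R : realType.
Lemma ncV (v : R[i]) : nc v^-1 = (nc v)^-1.
Proof. by apply: complexI; rewrite fmorphV /= -!normE normfV. Qed.
Lemma nc_gg (x y : R) : nc (1 - (x +i* y) ^+ 2) ^+ 2 = gg (x, y).
Proof.
rewrite sq /nc normc_def /= sqr_sqrtr ?addr_ge0 ?sqr_ge0 //.
rewrite /gg /=; ring.
Qed.
End T4.
Section Final.
Variable R : realType.

Lemma sum_bound (f : nat -> R) : (forall n, 0 <= f n) ->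
  (\sum_(1 <= n <oo) (f n)%:E < +oo)%E -> exists S, forall N, \sum_(k < N) f k.+1 <= S.
Proof.
move=> f0 hf.
have hle N : (\sum_(1 <= i < N) (f i)%:E <= \sum_(1 <= n <oo) (f n)%:E)%E.
  by apply: nneseries_lim_ge => n _ _; rewrite lee_fin.
have s0 : (0 <= \sum_(1 <= n <oo) (f n)%:E)%E.
  by apply: le_trans (hle 0%N); rewrite big_geq.
have sfin : (\sum_(1 <= n <oo) (f n)%:E)%E \is a fin_num by rewrite ge0_fin_numE.
exists (fine (\sum_(1 <= n <oo) (f n)%:E)%E) => N.
rewrite -lee_fin fineK //; apply: le_trans (hle N.+1).
by rewrite sumEFin big_add1 /= big_mkord.
Qed.

Lemma geo_bound (q : R) : 0 <= q -> q < 1 ->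
  forall N, \sum_(k < N) (k.+1)%:R * q ^+ k <= ((1 - q) ^+ 2)^-1.
Proof.
move=> q0 q1 N.
have iden : (1 - q) ^+ 2 * \sum_(k < N) (k.+1)%:R * q ^+ k
    = 1 - (N.+1)%:R * q ^+ N + N%:R * q ^+ N.+1.
  elim: N => [|N IH]; first by rewrite big_ord0 mulr0 expr0 mulr1 mul0r; ring.
  rewrite big_ord_recr /= mulrDr IH !exprS -[N.+2]addn1 -[N.+1]addn1 !natrD; ring.
have pos : 0 < (1 - q) ^+ 2 by rewrite exprn_gt0 // subr_gt0.
rewrite -[X in _ <= X]mul1r ler_pdivlMr // mulrC iden.
have : 0 <= q ^+ N * ((N.+1)%:R - N%:R * q).
  apply: mulr_ge0; first exact: exprn_ge0.
  rewrite -addn1 natrD subr_ge0.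
  have : N%:R * q <= N%:R :> R by have := ler0n R N; nra.
  have := ler0n R N; lra.
rewrite exprS; have := ler0n R N; nra.
Qed.

End Final.
Unset Implicit Arguments.
Lemma maxC_R (R : realType) (r s : R) : Num.max r%:C s%:C = (Num.max r s)%:C.
Proof. by rewrite /Order.max ltcR; case: ifP. Qed.

Theorem theoremA2 (R : realType) (a b : nat -> R) :
  (forall n, (0 < n)%N -> 0 < a n) ->
  (* (i) *)
  ((\sum_(1 <= n <oo) ((`|b n| + `|a n ^+ 2 - 1|)%:E) < +oo)%E ->
     (forall z : R[i], `|z| <= 1 -> z != 1 -> z != -1 ->
        exists M : R, forall n, `|Gn a b n z| + `|Cn a b n z| <= M%:C)
     /\
     (forall K : set (R * R)%type, compact K ->
        (forall p, K p -> `|cplx p| <= 1 /\ cplx p != 1 /\ cplx p != -1) ->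
        exists M : R, forall p, K p -> forall n,
          `|Gn a b n (cplx p)| + `|Cn a b n (cplx p)| <= M%:C))
  /\
  (* (ii) *)
  ((\sum_(1 <= n <oo) ((n%:R * (`|b n| + `|a n ^+ 2 - 1|))%:E) < +oo)%E ->
     exists A1 : R, forall n (z : R[i]), `|z| <= 1 ->
        `|Gn a b n z| <= A1%:C /\ `|Cn a b n z| / (1 + n%:R) <= A1%:C)
  /\
  (* (iii) *)
  (forall Cc Rr : R, 1 < Rr ->
     (forall n, (0 < n)%N -> `|b n| + `|a n ^+ 2 - 1| <= Cc * Rr ^- (2 * n)) ->
     exists A2 : R, forall (z : R[i]) n, `|z| < Rr%:C ->
        `|Gn a b n z| + `|Cn a b n z|
          <= A2%:C * (1 + n%:R) * (Num.max 1 `|z|) ^+ (2 * n)).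
Proof.
move=> apos.
have ha n : a n.+1 != 0 by rewrite gt_eqF // apos.
have hC z n := @CnS R a b n z (ha n).
have hG z n := @GnS R a b n z.
have hC0 z := @Cn0 R a b z.
have hG0 z := @Gn0 R a b z.
pose al n := a n.+1 ^+ 2.
pose be n := b n.+1.
have core1' (z w : R[i]) (L S : R) : nc z <= 1 -> w * (1 - z ^+ 2) = 1 ->
    nc w <= L - 1 -> 1 <= L ->
    (forall N, \sum_(k < N) (`|b k.+1| + `|a k.+1 ^+ 2 - 1|) <= S) ->
    forall n, `|Gn a b n z| + `|Cn a b n z| <= (4 * L ^+ 2 * expR (2 * L ^+ 2 * S))%:C.
  move=> hz hw hwL hL hS n; rewrite !normE -rmorphD lecR.
  exact: (@core1 R z (fun n => Gn a b n z) (fun n => Cn a b n z) al be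
           (hG0 z) (hC0 z) (hC z) (hG z) w L S hz hw hwL hL hS n).
have core2' (z : R[i]) (S : R) :
    (forall N, \sum_(k < N) (k.+1)%:R * (`|b k.+1| + `|a k.+1 ^+ 2 - 1|) <= S) ->
    forall n, nc (Gn a b n z) <= (Num.max 1 (nc z)) ^+ (2 * n) * expR (2 * S) /\
      nc (Cn a b n z) <= (n.+1)%:R * (Num.max 1 (nc z)) ^+ (2 * n) * expR (2 * S).
  move=> hS n.
  exact: (@core2 R z (fun n => Gn a b n z) (fun n => Cn a b n z) al be
           (hG0 z) (hC0 z) (hC z) (hG z) S hS n).
have ncle1 (z : R[i]) : `|z| <= 1 -> nc z <= 1.
  by rewrite normE => h; rewrite -lecR.
split.
  move=> hsum.
  have [S hS] := sum_bound (fun n => addr_ge0 (normr_ge0 (b n)) (normr_ge0 (a n ^+ 2 - 1))) hsum.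
  split.
    move=> z hz hz1 hzm1.
    have v0 : 1 - z ^+ 2 != 0 by rewrite subr_eq0 eq_sym sqrf_eq1 negb_or hz1 hzm1.
    exists (4 * (1 + nc (1 - z ^+ 2)^-1) ^+ 2 * expR (2 * (1 + nc (1 - z ^+ 2)^-1) ^+ 2 * S)).
    apply: core1' => //.
    - exact: ncle1.
    - exact: mulVf.
    - lra.
    - have := nc_ge0 (1 - z ^+ 2)^-1; lra.
  move=> K cK hK.
  have hv p : K p -> 1 - (cplx p) ^+ 2 != 0.
    move=> Kp; have [_ [h1 hm1]] := hK p Kp.
    by rewrite subr_eq0 eq_sym sqrf_eq1 negb_or h1 hm1.
  have hgg p : K p -> gg p != 0.
    case: p => x y Kp; rewrite -nc_gg expf_eq0 /=.
    apply/eqP => h; move: (hv _ Kp); rewrite -normr_eq0 normE.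
    by rewrite -[cplx _]/(x +i* y) h eqxx.
  have [B hB] := compact_bound cK (fun p Kp => ggV_cont (hgg p Kp)).
  exists (4 * (2 + `|B|) ^+ 2 * expR (2 * (2 + `|B|) ^+ 2 * S)) => p Kp n.
  have [hz [h1 hm1]] := hK p Kp.
  apply: core1' => //.
  - exact: ncle1.
  - exact: mulVf (hv p Kp).
  - have hBp := hB p Kp.
    move: Kp hBp; case: p {hz h1 hm1} => x y Kp hBp.
    rewrite ncV.
    have e : ((nc (1 - (x +i* y) ^+ 2))^-1) ^+ 2 = (gg (x, y))^-1 by rewrite exprVn nc_gg.
    have := nc_ge0 (1 - (x +i* y) ^+ 2); rewrite -invr_ge0 => t0.
    have := ler_norm B; rewrite -[cplx _]/(x +i* y).
    move: e t0; set t := (nc _)^-1 => e t0 hBB.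
    have : t ^+ 2 <= `|B| by rewrite e; apply: le_trans hBp hBB.
    rewrite expr2; nra.
  - have := normr_ge0 B; lra.
split.
  move=> hsum.
  have [S hS] := sum_bound (f := fun n => n%:R * (`|b n| + `|a n ^+ 2 - 1|))
    (fun n => mulr_ge0 (ler0n R n) (addr_ge0 (normr_ge0 (b n)) (normr_ge0 (a n ^+ 2 - 1)))) hsum.
  exists (expR (2 * S)) => n z hz.
  have [g c] := core2' z S hS n.
  have M1 : Num.max 1 (nc z) = 1 by apply: max_l; exact: ncle1.
  rewrite M1 expr1n in g c.
  split.
    by rewrite normE lecR; rewrite mul1r in g.
  have -> : `|Cn a b n z| / (1 + n%:R) = (nc (Cn a b n z) / (1 + n%:R))%:C.
    by rewrite normE rmorphM fmorphV rmorphD rmorph1 rmorph_nat.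
  have n0 := ler0n R n.
  rewrite lecR ler_pdivrMr; last by lra.
  rewrite -natr1 in c; lra.
move=> Cc Rr hR hd.
set q := (Rr ^+ 2)^-1.
have R0 : 0 < Rr ^+ 2 by rewrite exprn_gt0 //; lra.
have q0 : 0 <= q by rewrite /q invr_ge0 ltW.
have q1 : q < 1 by rewrite /q invf_lt1 // expr2; nra.
have hS N : \sum_(k < N) (k.+1)%:R * (`|b k.+1| + `|a k.+1 ^+ 2 - 1|)
    <= `|Cc| * q * ((1 - q) ^+ 2)^-1.
  apply: le_trans (_ : _ <= \sum_(k < N) `|Cc| * q * ((k.+1)%:R * q ^+ k)) _.
    apply: ler_sum => k _.
    have hk := hd k.+1 isT.
    have e : Rr ^- (2 * k.+1) = q ^+ k.+1 by rewrite /q exprVn -exprM.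
    rewrite e in hk.
    have hk' : `|b k.+1| + `|a k.+1 ^+ 2 - 1| <= `|Cc| * q ^+ k.+1.
      apply: le_trans hk _; rewrite ler_wpM2r ?exprn_ge0 // ler_norm //.
    have -> : `|Cc| * q * ((k.+1)%:R * q ^+ k) = (k.+1)%:R * (`|Cc| * q ^+ k.+1) by rewrite exprS; ring.
    by rewrite ler_wpM2l // ler0n.
  rewrite -mulr_sumr; apply: ler_wpM2l; first by rewrite mulr_ge0.
  exact: geo_bound.
exists (2 * expR (2 * (`|Cc| * q * ((1 - q) ^+ 2)^-1))) => z n _.
have [g c] := core2' z _ hS n.
set M := Num.max 1 (nc z) in g c.
have eM : Num.max 1 `|z| = M%:C by rewrite normE -maxC_R.
rewrite eM !normE -rmorphD.
set E := expR _ in g c *.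
have eR : (2 * E * (1 + n%:R) * M ^+ (2 * n))%:C
    = (2 * E)%:C * (1 + n%:R) * M%:C ^+ (2 * n).
  rewrite !rmorphM rmorphXn; congr (_ * _ * _); by rewrite rmorphD rmorph1 rmorph_nat.
rewrite -eR lecR.
have M0 : 0 <= M by rewrite /M le_max ler01.
have Y0 : 0 <= M ^+ (2 * n) * E by rewrite mulr_ge0 ?exprn_ge0 // ltW ?expR_gt0.
have nY := mulr_ge0 (ler0n R n) Y0.
rewrite -natr1 in c; lra.
Qed.
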